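(* Let $k\ge2$, let $n_1,\dots,n_m$ be positive reals and $n=n_1+\cdots+n_m$. Let $F_k(x)=\left(\frac nk x\right)^{\frac1{k-1}}$ for $x\in[0,\frac kn]$ and $F_k(x)=1$ for $x>\frac kn$. In the $m$-group auction described in the context, suppose each of the $k-1$ disadvantaged bidders, independently, bids $n_i b_i$ on group $i$, where $(b_1,\dots,b_m)$ is drawn from an $m$-dimensional distribution such that each $b_i$ has cumulative distribution function $F_k$ and $n_1b_1+\cdots+n_mb_m=1$. Then the maximum over strategies of the adversary ${\mathcal A}$ of the expected number of objects won by ${\mathcal A}$ equals $n/k$.
   Context: $m$-group auction model: objects are divided into $m$ groups, group $i$ containing $n_i$ objects ($n_i$ a positive real, interpreted as the value of the group); the total number of objects is $n=\sum_i n_i$. There are $k$ bidders: an adversary ${\mathcal A}$ and $k-1$ disadvantaged bidders; each has budget $1$ and submits simultaneously nonnegative bids for the $m$ groups with total at most $1$. The highest bidder on a group obtains all $n_i$ objects in it; if $j$ bidders tie for the highest bid, each wins the group with probability $1/j$. ${\mathcal A}$ knows the disadvantaged bidders' bidding algorithm but not their realized bids; his bids are independent of theirs. *)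

(* Defs.v *)
From HB Require Import structures.
From mathcomp Require Import all_boot all_order all_algebra.
From mathcomp Require Import all_classical all_reals all_analysis.
Set Implicit Arguments. Unset Strict Implicit. Unset Printing Implicit Defensive.
Import Order.TTheory GRing.Theory Num.Theory.
Local Open Scope classical_set_scope.
Local Open Scope ring_scope.

Definition Fk (R : realType) (n : R) (k : nat) (x : R) : R :=
  if x < 0 then 0
  else if x <= k%:R / n then (n / k%:R * x) `^ (1 / (k%:R - 1))
  else 1.

(* Rectangles form a pi-system generating the joint sigma-algebras. *)
Definition indep_vecs (R : realType) (d : measure_display) (T : measurableType d)
  (P : probability T R) (I : finType) (m : nat) (X : I -> T -> 'I_m -> R) : Prop :=
  forall E : I -> 'I_m -> set R, (forall j i, measurable (E j i)) ->
    fine (P [set w | forall j i, E j i (X j w i)]) =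
    \prod_(j : I) fine (P [set w | forall i, E j i (X j w i)]).

(* Family of all k bidders: None = adversary, Some j = j-th disadvantaged bidder. *)
Definition all_bidders (R : realType) (T : Type) (m k : nat)
  (A : T -> 'I_m -> R) (B : 'I_k.-1 -> T -> 'I_m -> R) :
  option 'I_k.-1 -> T -> 'I_m -> R :=
  fun o => match o with None => A | Some j => B j end.

Definition adv_strategy (R : realType) (d : measure_display) (T : measurableType d)
  (m : nat) (A : T -> 'I_m -> R) : Prop :=
  (forall i, measurable_fun setT (fun w => A w i)) /\
  (forall w, (forall i, 0 <= A w i) /\ \sum_(i < m) A w i <= 1).

(* If some disadvantaged bid is strictly higher, he loses;
   otherwise he wins with probability 1/(1 + #ties). *)
Definition adv_win (R : realType) (T : Type) (m k : nat) (nv : 'I_m -> R)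
  (A : T -> 'I_m -> R) (B : 'I_k.-1 -> T -> 'I_m -> R) (i : 'I_m) (w : T) : R :=
  if [exists j, A w i < nv i * B j w i] then 0
  else (1 + #|[set j | nv i * B j w i == A w i]|%:R)^-1.

Definition adv_gain (R : realType) (T : Type) (m k : nat) (nv : 'I_m -> R)
  (A : T -> 'I_m -> R) (B : 'I_k.-1 -> T -> 'I_m -> R) (w : T) : R :=
  \sum_(i < m) nv i * adv_win nv A B i w.

Definition adv_expected (R : realType) (d : measure_display) (T : measurableType d)
  (P : probability T R) (m k : nat) (nv : 'I_m -> R)
  (A : T -> 'I_m -> R) (B : 'I_k.-1 -> T -> 'I_m -> R) : \bar R :=
  (\int[P]_w (adv_gain nv A B w)%:E)%E.

(* Main.v *)
Set Warnings "-notation-overridden,-ambiguous-paths,-notation-incompatible-prefix".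
Require Import Defs.
From HB Require Import structures.
From mathcomp Require Import all_boot all_order all_algebra.
From mathcomp Require Import all_classical all_reals all_analysis.
From mathcomp Require Import measurable_realfun.
From mathcomp Require Import ring lra.
Import Order.TTheory GRing.Theory Num.Theory.
Local Open Scope classical_set_scope.
Local Open Scope ring_scope.

Lemma prod_option (R : realType) (I : finType) (F : option I -> R) :
  \prod_(o : option I) F o = F None * \prod_(j : I) F (Some j).
Proof.
rewrite (bigD1 None) //=; congr (_ * _).
rewrite (reindex_omap (fun j : I => Some j) (fun o : option I => o)).
  by apply: eq_bigl => j /=; rewrite eqxx.
by case.
Qed.

Lemma int_mono (R : realType) (d : measure_display) (T : measurableType d)
  (P : probability T R) (f g : T -> \bar R) :
  (forall x, (0 <= f x)%E) -> (forall x, (f x <= g x)%E) ->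
  (\int[P]_x f x <= \int[P]_x g x)%E.
Proof.
move=> f0 fg.
have g0 x : (0 <= g x)%E by exact: (le_trans (f0 x)).
rewrite !ge0_integralTE //.
apply: ereal_sup_le => _ [h hf <-]; exists h => //= x.
exact: le_trans (hf x) (fg x).
Qed.

Lemma int_simple (R : realType) (d : measure_display) (T : measurableType d)
  (P : probability T R) (I : finType) (c : I -> R) (E : I -> set T) :
  (forall p, 0 <= c p) -> (forall p, measurable (E p)) ->
  (\int[P]_w (\sum_p c p * \1_(E p) w)%:E = (\sum_p c p * fine (P (E p)))%:E)%E.
Proof.
move=> c0 mE.
under eq_integral do rewrite -sumEFin.
rewrite ge0_integral_sum //; last by move=> p x _; rewrite lee_fin mulr_ge0.
rewrite -sumEFin; apply: eq_bigr => p _.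
rewrite (@integralZl_indic _ _ _ _ _ _ (fun=> E p)) //; last first.
  by move=> /lt_geF; rewrite c0.
  rewrite integral_indic // setIT EFinM fineK //; exact: fin_num_measure.
move=> p; apply/measurable_EFinP; apply: measurable_funM => //.
Qed.

Lemma Fk_pow (R : realType) (N : R) (k : nat) (t : R) :
  0 < N -> (2 <= k)%N -> 0 <= t -> t <= k%:R / N ->
  Fk N k t ^+ k.-1 = N / k%:R * t.
Proof.
move=> N0 hk t0 tk; rewrite /Fk ltNge t0 /= tk.
have x0 : 0 <= N / k%:R * t by rewrite mulr_ge0 // divr_ge0 // ltW.
case: k hk tk x0 => [//|k'] hk tk x0 /=.
have e : k'.+1%:R - 1 = k'%:R :> R by rewrite -natr1 addrK.
rewrite e -powR_mulrn ?powR_ge0 // -powRrM mul1r mulVf ?powRr1 //.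
by rewrite pnatr_eq0 -lt0n; case: k' {e tk x0} hk.
Qed.

Lemma Fk_pow_le (R : realType) (N : R) (k : nat) (t : R) :
  0 < N -> (2 <= k)%N -> 0 <= t ->
  Fk N k t ^+ k.-1 <= N / k%:R * t.
Proof.
move=> N0 hk t0; have [tk|tk] := leP t (k%:R / N).
  by rewrite Fk_pow.
have k0 : 0 < k%:R :> R by rewrite ltr0n; case: k hk {tk}.
rewrite /Fk ltNge t0 /=.
have -> : (t <= k%:R / N) = false by apply/negbTE; rewrite -ltNge.
rewrite expr1n.
rewrite -(ler_pM2l (_ : 0 < k%:R / N)) ?divr_gt0 // mulr1 mulrA.
have -> : k%:R / N * (N / k%:R) = 1 :> R.
  by field; rewrite ?gt_eqF // ?ltr0n ?N0 //; case: k hk {tk k0}.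
by rewrite mul1r ltW.
Qed.

Lemma indep_event (R : realType) (d : measure_display) (T : measurableType d)
  (P : probability T R) (m k : nat) (nv : 'I_m -> R)
  (A : T -> 'I_m -> R) (B : 'I_k.-1 -> T -> 'I_m -> R) (G : R -> R) :
  (forall j i (x : R), P [set w | B j w i <= x] = (G x)%:E) ->
  indep_vecs P (all_bidders A B) ->
  forall i (S : set R) (t : R), 0 < nv i -> measurable S ->
  fine (P [set w | S (A w i) /\ forall j, nv i * B j w i <= t]) =
  fine (P [set w | S (A w i)]) * G (t / nv i) ^+ k.-1.
Proof.
move=> hB hind i S t nv0 mS.
pose E (o : option 'I_k.-1) (i' : 'I_m) : set R :=
  if i' == i then (if o is None then S else [set` `]-oo, t / nv i]]) else setT.
have mE : forall o i', measurable (E o i').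
  move=> o i'; rewrite /E; case: (i' == i) => //; case: o => // j.
have := hind E mE.
have -> : [set w | forall o i', E o i' (all_bidders A B o w i')] =
          [set w | S (A w i) /\ forall j, nv i * B j w i <= t].
  apply/funext => w; apply/propext; split => /=.
    move=> h; split; first by have := h None i; rewrite /E eqxx.
    move=> j; have := h (Some j) i; rewrite /E eqxx /= in_itv /=.
    by rewrite ler_pdivlMr // mulrC => -[].
  move=> [hS hj] o i'; rewrite /E; case: eqP => [->|] //.
  case: o => [j|] //=; rewrite in_itv /= ler_pdivlMr // mulrC.
  by rewrite hj.
move=> ->; rewrite prod_option; congr (_ * _).
  congr (fine (P _)); apply/funext => w; apply/propext; split => /=.
    by move=> /(_ i); rewrite /E eqxx.
  by move=> h i'; rewrite /E; case: eqP => [->|].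
rewrite -[in RHS](card_ord k.-1) -prodr_const; apply: eq_bigr => j _.
have -> : [set w | forall i', E (Some j) i' (all_bidders A B (Some j) w i')] =
          [set w | B j w i <= t / nv i].
  apply/funext => w; apply/propext; split => /=.
    by move=> /(_ i); rewrite /E eqxx /= in_itv.
  by move=> h i'; rewrite /E; case: eqP => [->|] //=; rewrite in_itv /= h.
by rewrite hB.
Qed.

Lemma indep_const (R : realType) (d : measure_display) (T : measurableType d)
  (P : probability T R) (m k : nat) (a : 'I_m -> R)
  (B : 'I_k.-1 -> T -> 'I_m -> R) :
  indep_vecs P B -> indep_vecs P (all_bidders (fun=> a) B).
Proof.
move=> hB E mE; rewrite prod_option.
have [h|h] := pselect (forall i, E None i (a i)).
  have -> : [set w | forall o i, E o i (all_bidders (fun=> a) B o w i)] =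
            [set w | forall j i, E (Some j) i (B j w i)].
    apply/funext => w; apply/propext; split => /=.
      by move=> H j i; exact: (H (Some j) i).
    by move=> H [j|] i /=; [exact: H | exact: h].
  have -> : [set w | forall i, E None i (all_bidders (fun=> a) B None w i)] = setT.
    by apply/funext => w; apply/propext; split.
  rewrite probability_setT /= mul1r.
  exact: (hB (fun j => E (Some j))).
have -> : [set w | forall o i, E o i (all_bidders (fun=> a) B o w i)] = set0.
  by apply/funext => w; apply/propext; split => //= /(_ None).
have -> : [set w | forall i, E None i (all_bidders (fun=> a) B None w i)] = set0.
  by apply/funext => w; apply/propext; split.
by rewrite measure0 /= mul0r.
Qed.

Lemma limit_le (R : realType) (x c e : R) : 0 <= e ->
  (forall M : nat, (0 < M)%N -> x <= c + e / M%:R) -> x <= c.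
Proof.
move=> e0 h; apply/ler_addgt0Pr => eps eps0.
have hb := archi_boundP (divr_ge0 e0 (ltW eps0)).
set M := Num.bound (e / eps) in hb.
apply: (le_trans (h M.+1 isT)); rewrite lerD2l.
rewrite ler_pdivrMr ?ltr0n //.
rewrite ltr_pdivrMr // in hb.
rewrite mulrC; apply: (le_trans (ltW hb)).
by apply: ler_wpM2r; [exact: ltW | rewrite ler_nat].
Qed.

Definition Ival {R : realType} (M l : nat) : set R :=
  [set` `](l%:R - 1) / M%:R, l%:R / M%:R]].

Lemma grid_exists (R : realType) (a : R) (M : nat) : (0 < M)%N -> 0 <= a -> a <= 1 ->
  exists l : 'I_M.+1, Ival M l a.
Proof.
move=> M0 a0 a1.
have M0r : 0 < M%:R :> R by rewrite ltr0n.
have ex : exists n : nat, a <= n%:R / M%:R by exists M; rewrite mulfV ?gt_eqF.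
case: (ex_minnP ex) => l al lmin.
have lM : (l < M.+1)%N by rewrite ltnS; apply: lmin; rewrite mulfV ?gt_eqF.
exists (Ordinal lM); rewrite /Ival /= in_itv /= al andbT.
case: l al lmin {lM} => [|l] al lmin.
  by rewrite sub0r mulNr mul1r (lt_le_trans _ a0) // oppr_lt0 invr_gt0.
rewrite -natr1 addrK ltNge; apply/negP => /lmin; by rewrite ltnn.
Qed.

Lemma grid_unique (R : realType) (a : R) (M l l' : nat) : (0 < M)%N ->
  Ival M l a -> Ival M l' a -> l = l'.
Proof.
move=> M0; have M0r : 0 < M%:R :> R by rewrite ltr0n.
rewrite /Ival /= !in_itv /= => /andP[h1 h2] /andP[h3 h4].
have H1 : (l%:R - 1 < l'%:R :> R).
  by rewrite -(@ltr_pM2r _ M%:R^-1) ?invr_gt0 //; exact: lt_le_trans h1 h4.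
have H2 : (l'%:R - 1 < l%:R :> R).
  by rewrite -(@ltr_pM2r _ M%:R^-1) ?invr_gt0 //; exact: lt_le_trans h3 h2.
rewrite ltrBlDr natr1 ltr_nat in H1.
rewrite ltrBlDr natr1 ltr_nat in H2.
rewrite ltnS in H1; rewrite ltnS in H2.
by apply/eqP; rewrite eqn_leq H1 H2.
Qed.

Lemma mpre (R : realType) (d : measure_display) (T : measurableType d)
  (f : T -> R) (S : set R) :
  measurable_fun setT f -> measurable S -> measurable [set w | S (f w)].
Proof. by move=> mf mS; have := mf measurableT _ mS; rewrite setTI. Qed.

Lemma indic01 (R : realType) (T : Type) (E : set T) (w : T) :
  0 <= \1_E w :> R.
Proof. by rewrite indicE ler0n. Qed.

Lemma win_le (R : realType) (T : Type) (m k : nat) (nv : 'I_m -> R)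
  (A : T -> 'I_m -> R) (B : 'I_k.-1 -> T -> 'I_m -> R) (i : 'I_m) (w : T)
  (M : nat) : (0 < M)%N -> 0 <= A w i -> A w i <= 1 ->
  adv_win nv A B i w <= \sum_(l < M.+1)
     \1_([set w | Ival M l (A w i) /\ forall j, nv i * B j w i <= l%:R / M%:R]) w.
Proof.
move=> M0 a0 a1; rewrite /adv_win; case: ifP => [_|hno].
  by apply: sumr_ge0 => l _; exact: indic01.
have [l hl] := @grid_exists R _ M M0 a0 a1.
rewrite (bigD1 l) //= indicE mem_set; last first.
  split => // j; move: hl; rewrite /Ival /= in_itv /= => /andP[_ h2].
  apply: le_trans h2; rewrite leNgt; apply/negP => hlt.
  by move/negbT: hno; rewrite negb_exists => /forallP /(_ j); rewrite hlt.
rewrite [true%:R]/=.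
apply: (@le_trans _ _ 1); last first.
  by rewrite lerDl; apply: sumr_ge0 => l' _; exact: indic01.
by rewrite invf_le1 ?lerDl // ltr_wpDr.
Qed.

Lemma grid_sum_le (R : realType) (a : R) (M : nat) : (0 < M)%N -> 0 <= a ->
  \sum_(l < M.+1) (l%:R / M%:R) * \1_(Ival M l) a <= a + 1 / M%:R.
Proof.
move=> M0 a0; have M0r : 0 < M%:R :> R by rewrite ltr0n.
have [[l hl]|none] := pselect (exists l : 'I_M.+1, Ival M l a).
  rewrite (bigD1 l) //= big1 => [|l' hl']; last first.
    case: (pselect (Ival M l' a)) => [h|h].
      by move: hl'; rewrite (ord_inj (@grid_unique R a M l' l M0 h hl)) eqxx.
    by rewrite indicE memNset // mulr0.
  rewrite indicE mem_set // mulr1 addr0.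
  move: hl; rewrite /Ival /= in_itv /= => /andP[h1 _].
  have -> : l%:R / M%:R = (l%:R - 1) / M%:R + 1 / M%:R :> R.
    by rewrite -mulrDl subrK.
  by rewrite lerD2r ltW.
rewrite big1 ?addr_ge0 ?divr_ge0 ?ler0n // => l _.
have h : ~ Ival M l a by move=> h; apply: none; exists l.
by rewrite indicE memNset // mulr0.
Qed.

Lemma upper_M (R : realType) (d : measure_display) (T : measurableType d)
  (P : probability T R) (m k : nat) (nv : 'I_m -> R)
  (B : 'I_k.-1 -> T -> 'I_m -> R) (A : T -> 'I_m -> R) (M : nat) :
  (2 <= k)%N -> (forall i, 0 < nv i) -> 0 < \sum_(l < m) nv l ->
  (forall j i (x : R),
      P [set w | B j w i <= x] = (Fk (\sum_(l < m) nv l) k x)%:E) ->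
  (forall j i, measurable_fun setT (fun w => B j w i)) ->
  adv_strategy A -> indep_vecs P (all_bidders A B) -> (0 < M)%N ->
  (adv_expected P nv A B <=
     ((\sum_(l < m) nv l) / k%:R * (1 + m%:R / M%:R))%:E)%E.
Proof.
move=> hk nv0 N0 hB mB [mA hA] hind M0.
set N := \sum_(l < m) nv l in N0 hB *.
have M0r : 0 < M%:R :> R by rewrite ltr0n.
have k0 : 0 < k%:R :> R by rewrite ltr0n; case: k hk {hB mB hind B}.
have A0 w i : 0 <= A w i by case: (hA w) => h _; exact: h.
have A1 w i : A w i <= 1.
  case: (hA w) => h0 h1; apply: le_trans h1.
  rewrite (bigD1 i) //= lerDl; apply: sumr_ge0 => l _; exact: h0.
pose W (p : 'I_m * 'I_M.+1) := [set w | Ival M p.2 (A w p.1) /\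
   forall j, nv p.1 * B j w p.1 <= p.2%:R / M%:R].
pose Is (p : 'I_m * 'I_M.+1) := [set w | Ival M p.2 (A w p.1)].
have mI p : measurable (Is p) by apply: mpre (mA p.1) _; exact: measurable_itv.
have mW p : measurable (W p).
  have -> : W p = Is p `&` \bigcap_(j in [set: 'I_k.-1])
      [set w | [set` `]-oo, p.2%:R / M%:R / nv p.1]] (B j w p.1)].
    apply/funext => w; apply/propext; split.
      move=> [h1 h2]; split => // j _ /=.
      by rewrite in_itv /= ler_pdivlMr // mulrC; exact: h2.
    move=> [h1 h2]; split => // j; have := h2 j I.
    by rewrite /= in_itv /= ler_pdivlMr // mulrC.
  apply: measurableI => //; apply: fin_bigcap_measurable; first exact: finite_finset.
  by move=> j _; apply: mpre (mB j p.1) _; exact: measurable_itv.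
have step1 : (adv_expected P nv A B <=
    \int[P]_w (\sum_p nv p.1 * \1_(W p) w)%:E)%E.
  apply: int_mono => w.
    rewrite lee_fin /adv_gain; apply: sumr_ge0 => i _; apply: mulr_ge0.
      exact: ltW.
    by rewrite /adv_win; case: ifP => // _; rewrite invr_ge0 addr_ge0 ?ler0n.
  rewrite lee_fin /adv_gain -(pair_bigA _ (fun i l => nv i * \1_(W (i, l)) w)) /=.
  apply: ler_sum => i _; rewrite -mulr_sumr; apply: ler_wpM2l; first exact: ltW.
  exact: win_le.
rewrite int_simple // in step1; last by move=> p; exact: ltW.
apply: (le_trans step1); rewrite lee_fin.
have step3 : \sum_(p : 'I_m * 'I_M.+1) nv p.1 * fine (P (W p)) <=
    N / k%:R * \sum_(p : 'I_m * 'I_M.+1) (p.2%:R / M%:R) * fine (P (Is p)).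
  rewrite mulr_sumr; apply: ler_sum => p _.
  have e : fine (P (W p)) = fine (P (Is p)) *
      Fk N k (p.2%:R / M%:R / nv p.1) ^+ k.-1.
    exact: (@indep_event R d T P m k nv A B (Fk N k) hB hind p.1
              (Ival M p.2) (p.2%:R / M%:R) (nv0 p.1) (measurable_itv _)).
  have fP0 : 0 <= fine (P (Is p)) by apply: fine_ge0; exact: measure_ge0.
  have t0 : 0 <= p.2%:R / M%:R / nv p.1 by rewrite !divr_ge0 ?ler0n ?ltW.
  rewrite e; apply: (le_trans (ler_wpM2l (ltW (nv0 p.1))
     (ler_wpM2l fP0 (@Fk_pow_le R N k _ N0 hk t0)))).
  have nz : nv p.1 != 0 by rewrite gt_eqF.
  rewrite le_eqVlt; apply/orP; left; apply/eqP; field.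
  by rewrite nz !gt_eqF.
apply: (le_trans step3); apply: ler_wpM2l; first by rewrite divr_ge0 // ltW.
have := @int_simple R d T P _ (fun p : 'I_m * 'I_M.+1 => p.2%:R / M%:R) Is.
move=> /(_ (fun p => divr_ge0 (ler0n _ _) (ltW M0r)) mI) h.
rewrite -lee_fin -h.
apply: (@le_trans _ _ (\int[P]_w ((1 + m%:R / M%:R)%:E))%E).
  apply: int_mono => w.
    by rewrite lee_fin; apply: sumr_ge0 => p _; rewrite mulr_ge0 ?divr_ge0 ?ler0n ?ltW.
  rewrite lee_fin /= -(pair_bigA _ (fun (i : 'I_m) (l : 'I_M.+1) => l%:R / M%:R * \1_(Is (i, l)) w)) /=.
  apply: (@le_trans _ _ (\sum_(i < m) (A w i + 1 / M%:R))).
    apply: ler_sum => i _.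
    have := @grid_sum_le R (A w i) M M0 (A0 w i).
    move=> hh; apply: le_trans hh; rewrite le_eqVlt; apply/orP; left; apply/eqP.
    apply: eq_bigr => l _; congr (_ * _); rewrite !indicE; congr (_%:R).
  rewrite big_split /= sumr_const card_ord lerD //; first by case: (hA w).
  by rewrite -mulrnAl.
rewrite le_eqVlt; apply/orP; left; apply/eqP; have := integral_cst P measurableT (1 + m%:R / M%:R)%:E.
move=> ->; rewrite -[X in _ = X]mule1; congr (_ * _)%E; exact: probability_setT.
Qed.

Lemma adv_gain_ge0 (R : realType) (T : Type) (m k : nat) (nv : 'I_m -> R)
  (A : T -> 'I_m -> R) (B : 'I_k.-1 -> T -> 'I_m -> R) (w : T) :
  (forall i, 0 < nv i) -> 0 <= adv_gain nv A B w.
Proof.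
move=> nv0; rewrite /adv_gain; apply: sumr_ge0 => i _; apply: mulr_ge0.
  exact: ltW.
by rewrite /adv_win; case: ifP => // _; rewrite invr_ge0 addr_ge0 ?ler0n.
Qed.

Lemma lower_M (R : realType) (d : measure_display) (T : measurableType d)
  (P : probability T R) (m k : nat) (nv : 'I_m -> R)
  (B : 'I_k.-1 -> T -> 'I_m -> R) (M : nat) :
  (2 <= k)%N -> (forall i, 0 < nv i) -> 0 < \sum_(l < m) nv l ->
  (forall j i (x : R),
      P [set w | B j w i <= x] = (Fk (\sum_(l < m) nv l) k x)%:E) ->
  (forall j i, measurable_fun setT (fun w => B j w i)) ->
  indep_vecs P B -> (0 < M)%N ->
  (((\sum_(l < m) nv l) / k%:R - (\sum_(l < m) nv l) / k%:R / M%:R)%R%:E <=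
    adv_expected P nv (fun _ i => (nv i / \sum_(l < m) nv l)%R) B)%E.
Proof.
move=> hk nv0 N0 hB mB hindB M0.
set N := \sum_(l < m) nv l in N0 hB *.
have M0r : 0 < M%:R :> R by rewrite ltr0n.
have k0 : 0 < k%:R :> R by rewrite ltr0n; case: k hk {hB mB hindB B}.
pose a := fun i : 'I_m => nv i / N.
pose y := (1 - 1 / M%:R) / N.
have y0 : 0 <= y.
  apply: divr_ge0; last exact: ltW.
  by rewrite subr_ge0 ler_pdivrMr // mul1r ler1n.
have yN : y < 1 / N.
  by rewrite ltr_pM2r ?invr_gt0 // gtrBl divr_gt0.
have hind := @indep_const R d T P m k a B hindB.
pose V (i : 'I_m) := [set w | [set: R] ((fun=> a) w i) /\
    forall j, nv i * B j w i <= nv i * y].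
have mV i : measurable (V i).
  have -> : V i = \bigcap_(j in [set: 'I_k.-1])
      [set w | [set` `]-oo, y]] (B j w i)].
    apply/funext => w; apply/propext; split.
      move=> [_ h2] j _ /=; rewrite in_itv /= -(ler_pM2l (nv0 i)); exact: h2.
    move=> h2; split => // j; have := h2 j I.
    by rewrite /= in_itv /= (ler_pM2l (nv0 i)).
  apply: fin_bigcap_measurable; first exact: finite_finset.
  by move=> j _; apply: mpre (mB j i) _; exact: measurable_itv.
have step1 : (\int[P]_w (\sum_i nv i * \1_(V i) w)%:E <=
    adv_expected P nv (fun=> a) B)%E.
  apply: int_mono => w.
    by rewrite lee_fin; apply: sumr_ge0 => i _; apply: mulr_ge0; [exact: ltW | exact: indic01].
  rewrite lee_fin /adv_gain; apply: ler_sum => i _.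
  apply: ler_wpM2l; first exact: ltW.
  rewrite indicE; case: (pselect (V i w)) => [hV|hV]; last first.
    rewrite memNset // /adv_win; case: ifP => // _.
    by rewrite invr_ge0 addr_ge0 ?ler0n.
  rewrite mem_set // /adv_win.
  have lt j : nv i * B j w i < a i.
    apply: (le_lt_trans (proj2 hV j)); rewrite /a ltr_pM2l //.
    by move: yN; rewrite div1r.
  have -> : [exists j, a i < nv i * B j w i] = false.
    apply/negbTE; rewrite negb_exists; apply/forallP => j.
    by rewrite -leNgt ltW.
  rewrite eq_card0 ?addr0 ?invr1 // => j.
  by rewrite /in_mem /= /in_set asboolF //= lt_eqF.
rewrite int_simple // in step1; last by move=> i; exact: ltW.
apply: le_trans step1; rewrite lee_fin.
have e i : fine (P (V i)) = N / k%:R * y.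
  have := @indep_event R d T P m k nv (fun=> a) B (Fk N k) hB hind i setT
    (nv i * y) (nv0 i) measurableT.
  rewrite /V => ->.
  have -> : [set w : T | [set: R] ((fun=> a) w i)] = setT by [].
  rewrite probability_setT /= mul1r mulrAC mulfV ?gt_eqF // mul1r.
  rewrite Fk_pow //; apply: (le_trans (ltW yN)).
  by rewrite ler_pM2r ?invr_gt0 // ler1n; exact: ltnW.
rewrite [X in _ <= X](eq_bigr (fun p => nv p * (N / k%:R * y))); last by move=> p _ /=; rewrite e.
rewrite -mulr_suml -/N.
rewrite le_eqVlt; apply/orP; left; apply/eqP; rewrite /y; field.
by rewrite !gt_eqF.
Qed.

Theorem lemma5p2 (R : realType) (d : measure_display) (T : measurableType d)
  (P : probability T R) (m k : nat) (nv : 'I_m -> R)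
  (B : 'I_k.-1 -> T -> 'I_m -> R) :
  (2 <= k)%N ->
  (forall i, 0 < nv i) ->
  (forall j i, measurable_fun setT (fun w => B j w i)) ->
  (forall j i (x : R),
      P [set w | B j w i <= x] = (Fk (\sum_(l < m) nv l) k x)%:E) ->
  (forall j, P [set w | \sum_(i < m) nv i * B j w i = 1] = 1%E) ->
  indep_vecs P B ->
  (forall A : T -> 'I_m -> R, adv_strategy A ->
     indep_vecs P (all_bidders A B) ->
     (adv_expected P nv A B <= ((\sum_(l < m) nv l) / k%:R)%:E)%E) /\
  (exists A : T -> 'I_m -> R, adv_strategy A /\
     indep_vecs P (all_bidders A B) /\
     adv_expected P nv A B = ((\sum_(l < m) nv l) / k%:R)%:E).
Proof.
move=> hk nv0 mB hB hsum hindB.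
have k1 : (0 < k.-1)%N by case: k hk {B mB hB hsum hindB} => // -[].
have m0 : (0 < m)%N.
  case: (posnP m) => // m0; exfalso.
  have := hsum (Ordinal k1); subst m.
  have -> : [set w | \sum_(i < 0) nv i * B (Ordinal k1) w i = 1] = set0.
    apply/funext => w; apply/propext; split => //=.
    by rewrite big_ord0 => /esym/eqP; rewrite oner_eq0.
  by rewrite measure0 => /esym/eqP; rewrite onee_eq0.
have N0 : 0 < \sum_(l < m) nv l.
  rewrite (bigD1 (Ordinal m0)) //=; apply: (lt_le_trans (nv0 (Ordinal m0))).
  by rewrite lerDl; apply: sumr_ge0 => l _; exact: ltW.
have k0 : 0 < k%:R :> R by rewrite ltr0n; case: k hk {B mB hB hsum hindB k1}.
have c0 : 0 <= (\sum_(l < m) nv l) / k%:R by rewrite divr_ge0 // ltW.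
have part1 : forall A : T -> 'I_m -> R, adv_strategy A ->
     indep_vecs P (all_bidders A B) ->
     (adv_expected P nv A B <= ((\sum_(l < m) nv l) / k%:R)%:E)%E.
  move=> A hA hind.
  have up := fun M M0 => @upper_M R d T P m k nv B A M hk nv0 N0 hB mB hA hind M0.
  have ge0 : (0 <= adv_expected P nv A B)%E.
    by apply: integral_ge0 => w _; rewrite lee_fin; exact: adv_gain_ge0.
  have fin : adv_expected P nv A B \is a fin_num.
    by rewrite ge0_fin_numE // (le_lt_trans (up 1%N isT)) ?ltry.
  rewrite -(fineK fin) lee_fin.
  apply: (@limit_le R _ _ ((\sum_(l < m) nv l) / k%:R * m%:R)).
    by rewrite mulr_ge0 ?ler0n.
  move=> M M0; rewrite -lee_fin fineK //; apply: (le_trans (up M M0)).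
  by rewrite lee_fin le_eqVlt; apply/orP; left; apply/eqP; ring.
split => //.
pose a := fun i : 'I_m => nv i / \sum_(l < m) nv l.
have hstrat : adv_strategy (T:=T) (fun=> a).
  split => [i|w]; first exact: measurable_cst.
  split => [i|]; first by rewrite /a divr_ge0 // ltW.
  by rewrite /a -mulr_suml mulfV ?gt_eqF.
have hind := @indep_const R d T P m k a B hindB.
exists (fun=> a); split => //; split => //.
apply/le_anti/andP; split; first exact: part1.
have low := fun M M0 => @lower_M R d T P m k nv B M hk nv0 N0 hB mB hindB M0.
have ge0 : (0 <= adv_expected P nv (fun=> a) B)%E.
  by apply: integral_ge0 => w _; rewrite lee_fin; exact: adv_gain_ge0.
have fin : adv_expected P nv (fun=> a) B \is a fin_num.
  by rewrite ge0_fin_numE // (le_lt_trans (part1 _ hstrat hind)) ?ltry.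
rewrite -(fineK fin) lee_fin.
apply: (@limit_le R _ _ ((\sum_(l < m) nv l) / k%:R)) => // M M0.
rewrite -lerBlDr -lee_fin fineK //; exact: low.
Qed.
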